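(* Let $p$ be a prime, $n,m$ positive integers, $0\le s\le n$ an integer, and $F:\mathbb{F}_{p^n}\to\mathbb{F}_{p^m}$ a function. Put $\alpha=p^{2n-m}-p^{n+s-m}$ and $\beta=p^{n+s}+p^{2n-m}-p^{n+s-m}$. Then $F$ is a vectorial $s$-plateaued function if and only if for all $x\in\mathbb{F}_{p^n}$ and $y\in\mathbb{F}_{p^m}$, \[\sum_{a\in\mathbb{F}_{p^n}}\left|\{u\in\mathbb{F}_{p^n} : y=F(u+x-a)-F(u)+F(a)\}\right|=\begin{cases}\alpha & \text{if } y\neq F(x),\\ \beta & \text{if } y=F(x).\end{cases}\]
   Context: $\zeta_p=e^{2\pi i/p}$, $Tr_n(z)=\sum_{i=0}^{n-1}z^{p^i}$ (similarly $Tr_m$). For $b\in\mathbb{F}_{p^m}^*$, $F_b(x)=Tr_m(bF(x))$ with Walsh transform $\widehat{F_b}(a)=\sum_{x\in\mathbb{F}_{p^n}}\zeta_p^{F_b(x)-Tr_n(ax)}$. $F$ is vectorial $s$-plateaued if for every $b\in\mathbb{F}_{p^m}^*$ and every $a\in\mathbb{F}_{p^n}$, $|\widehat{F_b}(a)|\in\{0,p^{(n+s)/2}\}$. *)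

(* Defs.v *)
From HB Require Import structures.
From mathcomp Require Import all_boot all_order all_algebra all_field.
Set Implicit Arguments. Unset Strict Implicit. Unset Printing Implicit Defensive.
Import Order.TTheory GRing.Theory Num.Theory.
Local Open Scope ring_scope.

(* zeta_p = e^{2 pi i / p} in the algebraic complex numbers algC:
   p.-root (-1) is the p-th root of -1 of minimal nonnegative argument,
   i.e. e^{i pi / p}; its square is e^{2 pi i / p}. *)
Definition zeta (p : nat) : algC := (p.-root (-1)) ^+ 2.

Definition Tr (K : fieldType) (p n : nat) (z : K) : K :=
  \sum_(i < n) z ^+ (p ^ i)%N.

(* The integer representative in {0,..,p-1} of an element t of the prime
   field of K (t = k%:R); 0 if there is none (never happens for traces). *)
Definition fpval (K : finFieldType) (p : nat) (t : K) : nat :=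
  odflt 0%N (omap (@nat_of_ord p) [pick k : 'I_p | (k%:R : K) == t]).

Definition zpow (K : finFieldType) (p : nat) (t : K) : algC :=
  zeta p ^+ fpval p t.

Definition walsh (K L : finFieldType) (p n m : nat) (F : K -> L)
    (b : L) (a : K) : algC :=
  \sum_(x : K) zeta p ^ ((fpval p (Tr p m (b * F x)))%:Z
                          - (fpval p (Tr p n (a * x)))%:Z).

Definition vec_plateaued (K L : finFieldType) (p n m s : nat) (F : K -> L) :=
  forall b : L, b != 0 -> forall a : K,
    `|walsh p n m F b a| = 0 \/
    `|walsh p n m F b a| = sqrtC ((p%:R : algC) ^+ (n + s)).

(* Main.v *)
Require Import Defs.
From HB Require Import structures.
From mathcomp Require Import all_boot all_order all_algebra all_field.
From mathcomp Require Import ring lra zify.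
Import Order.TTheory GRing.Theory Num.Theory.
Local Open Scope ring_scope.

Section PrimeField.
Variables (p k : nat) (K : finFieldType).
Hypotheses (pr_p : prime p) (k_gt0 : (0 < k)%N) (cardK : #|K| = (p ^ k)%N).

Lemma charK : p \in [pchar K].
Proof. exact: card_finPcharP cardK pr_p. Qed.

Lemma natK_inj (i j : nat) : (i < p)%N -> (j < p)%N -> (i%:R : K) = j%:R -> i = j.
Proof.
wlog le_ij : i j / (i <= j)%N.
  move=> IH ip jp e; case: (leqP i j) => h; first exact: IH.
  by apply/esym/IH => //; apply: ltnW.
move=> ip jp e.
have : (j - i)%:R == 0 :> K by rewrite natrB // e subrr.
rewrite -(dvdn_pcharf charK) => hd.
case: (posnP (j - i)) => h; first by lia.
by have := dvdn_leq h hd; lia.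
Qed.

Lemma primefield_fix (t : K) : t ^+ p = t -> exists i : 'I_p, i%:R = t.
Proof.
move=> tp; case: (pickP (fun i : 'I_p => (i%:R : K) == t)) => [i /eqP <- | H]; first by exists i.
exfalso.
pose rs := t :: [seq (val i)%:R | i : 'I_p].
pose P : {poly K} := 'X^p - 'X.
have p_gt1 := prime_gt1 pr_p.
have szP : size P = p.+1.
  by rewrite /P size_polyDl ?size_polyXn // size_polyN size_polyX ltnS.
have P0 : P != 0 by rewrite -size_poly_eq0 szP.
have hr : all (root P) rs.
  rewrite /= rootE !hornerE tp subrr eqxx /=.
  apply/allP => x /mapP [i _ ->]; rewrite rootE !hornerE.
  by rewrite -(pFrobenius_autE charK) pFrobenius_aut_nat subrr.
have hu : uniq rs.
  rewrite /= map_inj_uniq ?enum_uniq ?andbT.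
    by apply/negP => /mapP [i _ ei]; move: (H i); rewrite -ei eqxx.
  by move=> i j /natK_inj e; apply: val_inj; apply: e.
have := @max_poly_roots _ P rs P0 hr hu.
by rewrite szP /rs /= size_map size_enum_ord ltnn.
Qed.

Lemma fpvalE (i : nat) : (i < p)%N -> fpval p (i%:R : K) = i.
Proof.
move=> ip; rewrite /fpval; case: pickP => [j /eqP e|]; first by rewrite /= (natK_inj _ _ (ltn_ord j) ip e).
by move/(_ (Ordinal ip)); rewrite eqxx.
Qed.

Lemma fpvalP (t : K) : (exists i : 'I_p, i%:R = t) -> (fpval p t < p)%N /\ (fpval p t)%:R = t.
Proof. by case=> i <-; rewrite fpvalE. Qed.

Definition tr (x : K) := Tr p k x.

Lemma pnat_pk i : [pchar K].-nat (p ^ i)%N.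
Proof. by rewrite (eq_pnat _ (pcharf_eq charK)) pnatX pnat_id. Qed.

Lemma trD x y : tr (x + y) = tr x + tr y.
Proof.
rewrite /tr /Tr -big_split /=; apply: eq_bigr => i _.
by rewrite exprDn_pchar // pnat_pk.
Qed.

Lemma tr_fix x : tr x ^+ p = tr x.
Proof.
rewrite -(pFrobenius_autE charK) /tr /Tr rmorph_sum /=.
have -> : \sum_(i < k) pFrobenius_aut charK (x ^+ (p ^ i)) = \sum_(i < k) x ^+ (p ^ i.+1).
  by apply: eq_bigr => i _; rewrite pFrobenius_autE -exprM expnSr.
case: k k_gt0 cardK => // k' _ ck.
rewrite big_ord_recr big_ord_recl /= -ck expf_card expn0 expr1 addrC.
by congr (_ + _); apply: eq_bigr.
Qed.

Lemma tr_prime x : exists i : 'I_p, i%:R = tr x.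
Proof. exact: primefield_fix (tr_fix x). Qed.

Lemma tr_nonzero : exists x, tr x != 0.
Proof.
case: (pickP (fun x => tr x != 0)) => [x hx| H]; first by exists x.
exfalso.
pose P : {poly K} := \sum_(i < k) 'X^(p ^ i).
have p_gt1 := prime_gt1 pr_p.
have coefP j : P`_j = \sum_(i < k) (j == p ^ i)%N%:R.
  by rewrite /P coef_sum; apply: eq_bigr => i _; rewrite coefXn.
have hk : (k.-1 < k)%N by lia.
have P0 : P != 0.
  apply/eqP => /(congr1 (fun q : {poly K} => q`_(p ^ k.-1))).
  rewrite coef0 coefP (bigD1 (Ordinal hk)) //= eqxx big1 ?addr0.
    by move/eqP; rewrite oner_eq0.
  move=> i /eqP ne; rewrite eqn_exp2l //.
  by case: eqP => // e; case: ne; apply: val_inj; rewrite /= e.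
have szP : (size P <= (p ^ k.-1).+1)%N.
  apply/leq_sizeP => j hj; rewrite coefP big1 // => i _.
  case: eqP => // e; move: hj; rewrite e.
  have : (p ^ i <= p ^ k.-1)%N by rewrite leq_exp2l //; have := ltn_ord i; lia.
  lia.
have := @max_poly_roots _ P (enum K) P0.
rewrite enum_uniq -cardE cardK.
have -> : all (root P) (enum K).
  apply/allP => x _; rewrite rootE /P horner_sum.
  have := H x; rewrite /= /tr /Tr => /negbFE hx.
  by rewrite (eq_bigr (fun i : 'I_k => x ^+ (p ^ i))) // => i _; rewrite hornerXn.
move=> /(_ isT isT) /leq_trans /(_ szP); rewrite ltnS.
rewrite -(prednK k_gt0) expnS leqNgt => /negP; apply.
by rewrite -[X in (X < _)%N]mul1n ltn_mul2r p_gt1 expn_gt0 prime_gt0.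
Qed.

End PrimeField.
Section Zeta.
Variable p : nat.
Hypothesis pr_p : prime p.

Lemma zeta_p : zeta p ^+ p = 1.
Proof.
by rewrite /zeta exprAC rootCK ?prime_gt0 // sqrrN expr1n.
Qed.

Lemma zeta_neq1 : zeta p != 1.
Proof.
have p_gt0 := prime_gt0 pr_p.
rewrite /zeta; set r := nthroot _ _.
have rp : r ^+ p = -1 by rewrite /r rootCK.
rewrite sqrf_eq1; apply/negP => /orP [/eqP r1 | /eqP r1].
  by move: rp; rewrite r1 expr1n => /eqP; rewrite -subr_eq0 opprK -mulr2n pnatr_eq0.
have podd : odd p.
  case: (even_prime pr_p) => [p2|//]; move: rp; rewrite r1 p2 sqrrN expr1n => /eqP.
  by rewrite -subr_eq0 opprK -mulr2n pnatr_eq0.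
have [w prim_w] := C_prim_root_exists p_gt0.
have wp : w ^+ p = 1 := prim_expr_order prim_w.
pose w' := if 0 <= 'Im (- w) then w else w^*.
have w'p : w' ^+ p = 1 by rewrite /w'; case: ifP => _ //; rewrite -rmorphXn wp rmorph1.
pose z := - w'.
have zp : z ^+ p = -1 by rewrite /z exprNn w'p mulr1 -signr_odd podd.
have Imz : 0 <= 'Im z.
  rewrite /z /w'; case: ifP => // /negbT; rewrite -real_ltNge ?Creal_Im ?rpred0 //.
  by rewrite !raddfN /= Im_conj opprK oppr_lt0 => h; rewrite ltW.
have Rez : 'Re z <= -1.
  have := rootC_Re_max p_gt0 zp Imz; rewrite -/r r1.
  have -> // : 'Re (-1 : algC) = -1 by apply/Creal_ReP; rewrite rpredN rpred1.
have nz : `|z| = 1.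
  apply/eqP; rewrite -(pexpr_eq1 p_gt0) ?normr_ge0 // -normrX zp normrN normr1 //.
have Rez' : - 1 <= 'Re z.
  have := (leif_Re_Creal (- z)).1; rewrite normrN nz raddfN /=.
  by rewrite lerNl.
have z1 : z = -1.
  apply: eqC_semipolar.
  - by rewrite nz normrN normr1.
  - have -> : 'Re (-1 : algC) = -1 by apply/Creal_ReP; rewrite rpredN rpred1.
    by apply/eqP; rewrite eq_le Rez Rez'.
  - have -> : 'Im (-1 : algC) = 0 by apply/Creal_ImP; rewrite rpredN rpred1.
    by rewrite mulr0.
have w1 : w = 1.
  move: z1; rewrite /z /w' => /eqP; rewrite eqr_opp; case: ifP => _ /eqP //.
  by move/(congr1 (@Num.conj _)); rewrite conjCK rmorph1.
by have := prim_order_dvd prim_w 1; rewrite w1 expr1n eqxx dvdn1 => /eqP p1; move: p_gt0 (prime_gt1 pr_p); rewrite p1.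
Qed.

Lemma zeta_pow_neq1 j : (0 < j < p)%N -> zeta p ^+ j != 1.
Proof.
move=> /andP [j0 jp].
have [q prim_q qp] := prim_order_exists (prime_gt0 pr_p) zeta_p.
have q1 : q != 1%N.
  apply/eqP => q1; move: prim_q; rewrite q1 => /prim_expr_order; rewrite expr1 => /eqP.
  by apply/negP; apply: zeta_neq1.
have qp' : q = p.
  exact/(prime_nt_dvdP pr_p q1).
rewrite -(prim_order_dvd prim_q) qp'; apply/negP => /(dvdn_leq j0); lia.
Qed.
End Zeta.


Section Char.
Variables (p k : nat) (K : finFieldType).
Hypotheses (pr_p : prime p) (k_gt0 : (0 < k)%N) (cardK : #|K| = (p ^ k)%N).

Let fpE := @fpvalE p k K pr_p k_gt0 cardK.
Let trP := @tr_prime p k K pr_p k_gt0 cardK.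

Definition chi (x : K) : algC := zeta p ^+ fpval p (tr p k K x).

Lemma chiD x y : chi (x + y) = chi x * chi y.
Proof.
rewrite /chi; have [i ei] := trP x.
have [j ej] := trP y.
rewrite (trD _ _ _ pr_p cardK) -ei -ej -natrD -(GRing.natr_mod_pchar (charK _ _ _ pr_p cardK)).
rewrite !fpE ?ltn_mod ?prime_gt0 // ?ltn_ord //.
by rewrite expr_mod ?zeta_p // exprD.
Qed.

Lemma chi0 : chi 0 = 1.
Proof.
rewrite /chi /tr /Tr big1 => [|i _]; last by rewrite expr0n expn_eq0 eqn0Ngt prime_gt0.

by rewrite -[0 : K](mulr0n 1) fpE ?prime_gt0.
Qed.

Lemma chi_neq0 x : chi x != 0.
Proof.
apply/eqP => h; have := chiD x (- x); rewrite subrr chi0 h mul0r.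
by apply/eqP; rewrite oner_eq0.
Qed.

Lemma chiN x : chi (- x) = (chi x)^-1.
Proof.
have := chiD x (- x); rewrite subrr chi0 => /esym h.
by rewrite -[chi (-x)]mul1r -(mulVf (chi_neq0 x)) -mulrA h mulr1.
Qed.

Lemma chiB x y : chi (x - y) = chi x / chi y.
Proof. by rewrite chiD chiN. Qed.

Lemma norm_zeta : `|zeta p| = 1.
Proof.
apply/eqP; rewrite -(pexpr_eq1 (prime_gt0 pr_p)) ?normr_ge0 //.
by rewrite -normrX zeta_p ?normr1.
Qed.

Lemma conj_chi x : (chi x)^* = (chi x)^-1.
Proof.
by rewrite invC_norm /chi normrX norm_zeta expr1n expr1n invr1 mul1r.
Qed.

Lemma sum_chi_nz : \sum_(z : K) chi z = 0.
Proof.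
have [z0 hz0] := tr_nonzero _ _ _ pr_p k_gt0 cardK.
have e : \sum_(z : K) chi z = chi z0 * \sum_(z : K) chi z.
  rewrite mulr_sumr (reindex_inj (addrI z0)) /=.
  by apply: eq_bigr => z _; rewrite chiD.
have : chi z0 != 1.
  rewrite /chi; have [j ej] := trP z0.
  rewrite -ej fpE ?ltn_ord //; apply: zeta_pow_neq1 => //.
  rewrite ltn_ord andbT lt0n; apply/negP => /eqP j0.
  by move: hz0; rewrite -ej j0 eqxx.
move=> h; apply/eqP; move/eqP: e; rewrite -subr_eq0 -{1}[\sum_z chi z]mul1r -mulrBl mulf_eq0.
by rewrite subr_eq0 eq_sym (negbTE h).
Qed.

Lemma sum_chi c : \sum_(z : K) chi (c * z) = if c == 0 then (p ^ k)%:R else 0.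
Proof.
case: eqP => [->|/eqP c0].
  rewrite (eq_bigr (fun _ => 1)) => [|z _]; last by rewrite mul0r chi0.
  by rewrite sumr_const cardK.
transitivity (\sum_(z : K) chi z); last exact: sum_chi_nz.
by rewrite [RHS](reindex_inj (mulfI c0)).
Qed.


Lemma fourier_inv (g : K -> algC) x :
  \sum_(c : K) chi (c * x) * (\sum_(z : K) g z / chi (c * z)) = (p ^ k)%:R * g x.
Proof.
transitivity (\sum_(c : K) \sum_(z : K) g z * chi ((x - z) * c)).
  apply: eq_bigr => c _; rewrite mulr_sumr; apply: eq_bigr => z _.
  by rewrite [(x - z) * c]mulrC mulrBr chiB mulrCA.
rewrite exchange_big.
transitivity (\sum_(z : K) g z * (if x - z == 0 then (p ^ k)%:R else 0)).
  by apply: eq_bigr => z _; rewrite -mulr_sumr sum_chi.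
rewrite (bigD1 x) // subrr eqxx big1 => [|z /negbTE].
  by rewrite [X in X = _]addr0 mulrC.
by rewrite subr_eq0 eq_sym => ->; rewrite mulr0.
Qed.

Lemma pk_neq0 : (p ^ k)%:R != 0 :> algC.
Proof. by rewrite pnatr_eq0 expn_eq0 eqn0Ngt prime_gt0. Qed.

Lemma fourier_inj (g h : K -> algC) :
  (forall c, \sum_(z : K) g z / chi (c * z) = \sum_(z : K) h z / chi (c * z)) ->
  forall x, g x = h x.
Proof.
move=> H x; apply: (mulfI pk_neq0); rewrite -!fourier_inv.
by apply: eq_bigr => c _; rewrite H.
Qed.

End Char.


Section Main.
Variables (p n m s : nat) (K L : finFieldType) (F : K -> L).
Hypotheses (pr_p : prime p) (n_gt0 : (0 < n)%N) (m_gt0 : (0 < m)%N)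
  (cardK : #|K| = (p ^ n)%N) (cardL : #|L| = (p ^ m)%N).

Local Notation chiK := (chi p n K).
Local Notation chiL := (chi p m L).
Let chiK0 := chi_neq0 p n K pr_p n_gt0 cardK.
Let chiL0 := chi_neq0 p m L pr_p m_gt0 cardL.
Let chiKD := chiD p n K pr_p n_gt0 cardK.
Let chiLD := chiD p m L pr_p m_gt0 cardL.
Let chiKB := chiB p n K pr_p n_gt0 cardK.
Let chiLB := chiB p m L pr_p m_gt0 cardL.
Let chiKN := chiN p n K pr_p n_gt0 cardK.
Let chiLN := chiN p m L pr_p m_gt0 cardL.
Let chiK_0 := chi0 p n K pr_p n_gt0 cardK.
Let chiL_0 := chi0 p m L pr_p m_gt0 cardL.
Let conjK := conj_chi p n K pr_p.
Let conjL := conj_chi p m L pr_p.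
Let sumK := sum_chi p n K pr_p n_gt0 cardK.
Let sumL := sum_chi p m L pr_p m_gt0 cardL.
Let injK := fourier_inj p n K pr_p n_gt0 cardK.
Let injL := fourier_inj p m L pr_p m_gt0 cardL.

Definition f b z := chiL (b * F z).
Definition W b c := \sum_(z : K) f b z / chiK (c * z).
Definition T b x := \sum_(a : K) \sum_(u : K) f b (u + x - a) / f b u * f b a.

Lemma f_neq0 b z : f b z != 0. Proof. exact: chiL0. Qed.

Lemma walshE b c : walsh p n m F b c = W b c.
Proof.
rewrite /walsh /W; apply: eq_bigr => x _.
have z0 : zeta p != 0.
  apply/eqP => z0; have := zeta_p p pr_p; rewrite z0 expr0n.
  by rewrite eqn0Ngt prime_gt0 // => /eqP; rewrite eq_sym oner_eq0.
rewrite expfzDr // -exprnN /f /chi /tr.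
by [].
Qed.

Lemma conjCsum (I : finType) (G : I -> algC) : (\sum_i G i)^* = \sum_i (G i)^*.
Proof. exact: rmorph_sum. Qed.
Lemma conjCM (x y : algC) : (x * y)^* = x^* * y^*.
Proof. exact: rmorphM. Qed.
Lemma conjCV (x : algC) : (x^-1)^* = (x^*)^-1.
Proof. exact: fmorphV. Qed.

Lemma conjW b c : (W b c)^* = \sum_(u : K) (f b u)^-1 * chiK (c * u).
Proof.
rewrite /W conjCsum; apply: eq_bigr => u _.
rewrite conjCM conjCV /f conjK conjL.
by rewrite invrK mulrC.
Qed.

Lemma hatT b c : \sum_(x : K) T b x / chiK (c * x) = W b c * (W b c)^* * W b c.
Proof.
rewrite conjW /W /T.
transitivity (\sum_(a : K) \sum_(u : K) \sum_(v : K)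
   (f b v / chiK (c * v)) * ((f b u)^-1 * chiK (c * u)) * (f b a / chiK (c * a))).
  under eq_bigr do rewrite mulr_suml.
  rewrite exchange_big; apply: eq_bigr => a _.
  under eq_bigr do rewrite mulr_suml.
  rewrite exchange_big; apply: eq_bigr => u _.
  rewrite (reindex_inj (addIr (a - u))); apply: eq_bigr => v _.
  have -> : u + (v + (a - u)) - a = v by ring.
  rewrite mulrDr chiKD mulrDr mulrN chiKD chiKN.
  by field; rewrite ?f_neq0 ?chiK0.
rewrite exchange_big.
transitivity (\sum_(v : K) \sum_(u : K) \sum_(a : K)
   (f b v / chiK (c * v)) * ((f b u)^-1 * chiK (c * u)) * (f b a / chiK (c * a))).
  under eq_bigr do rewrite exchange_big.
  by rewrite exchange_big.
rewrite -mulrA mulr_suml; apply: eq_bigr => v _.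
rewrite mulr_suml mulr_sumr; apply: eq_bigr => u _.
rewrite mulr_sumr mulr_sumr; apply: eq_bigr => a _.
by rewrite [RHS]mulrA.
Qed.


Lemma T0 x : T 0 x = (p ^ n * p ^ n)%:R.
Proof.
transitivity (\sum_(a : K) \sum_(u : K) (1 : algC)).
  apply: eq_bigr => a _; apply: eq_bigr => u _.
  by rewrite /f !mul0r chiL_0 invr1 !mulr1.
by rewrite !sumr_const cardK -mulrnA.
Qed.

Definition Ncount x y :=
  (\sum_(a : K) #|[set u : K | (y == F (u + x - a) - F u + F a)%R]|)%N.

Lemma countE x y :
  (p ^ m)%:R * (Ncount x y)%:R = \sum_(b : L) (chiL (b * y))^-1 * T b x.
Proof.
rewrite /Ncount natr_sum mulr_sumr.
transitivity (\sum_(a : K) \sum_(u : K) \sum_(b : L)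
                chiL (b * (F (u + x - a) - F u + F a - y))).
  apply: eq_bigr => a _.
  rewrite -sum1_card big_mkcond natr_sum mulr_sumr; apply: eq_bigr => u _.
  transitivity (\sum_(b : L) chiL ((F (u + x - a) - F u + F a - y) * b)); last first.
    by apply: eq_bigr => b _; rewrite mulrC.
  rewrite sumL subr_eq0 eq_sym inE.
  by case: ifP => _; rewrite ?mulr1 ?mulr0.
under eq_bigr do rewrite exchange_big.
rewrite exchange_big; apply: eq_bigr => b _.
rewrite /T mulr_sumr; apply: eq_bigr => a _.
rewrite mulr_sumr; apply: eq_bigr => u _.
rewrite /f !mulrDr !mulrN !chiLD !chiLN.
by field; rewrite ?chiL0.
Qed.


Definition G b x := if b == 0 then (p ^ n * p ^ n)%:R else (p ^ (n + s))%:R * f b x.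

Lemma sumG x y : \sum_(b : L) (chiL (b * y))^-1 * G b x =
  (p ^ n * p ^ n)%:R + (p ^ (n + s))%:R * ((p ^ m)%:R * (y == F x)%:R - 1).
Proof.
rewrite (bigD1 0) // /G eqxx mul0r chiL_0 invr1 mul1r; congr (_ + _).
rewrite (eq_bigr (fun b => (p ^ (n + s))%:R * chiL (b * (F x - y)))); last first.
  move=> b /negbTE ->; rewrite /f mulrBr chiLB.
  by field; rewrite ?chiL0.
rewrite -mulr_sumr; congr (_ * _).
have := sumL (F x - y).
rewrite (eq_bigr (fun b => chiL (b * (F x - y)))); last by move=> b _; rewrite mulrC.
have -> : \sum_(b : L) chiL (b * (F x - y)) = 1 + \sum_(b | b != 0) chiL (b * (F x - y)).
  by rewrite (bigD1 0) // mul0r chiL_0.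
rewrite subr_eq0 eq_sym => h.
have -> : \sum_(b | b != 0) chiL (b * (F x - y)) = (if y == F x then (p ^ m)%:R else 0) - 1.
  by rewrite -h [1 + _]addrC addrK.
by case: (y == F x); rewrite ?mulr1 ?mulr0.
Qed.



Lemma hat_f b c : \sum_(x : K) ((p ^ (n + s))%:R * f b x) / chiK (c * x) = (p ^ (n + s))%:R * W b c.
Proof. by rewrite /W mulr_sumr; apply: eq_bigr => x _; rewrite mulrA. Qed.

Lemma plateau_T b : b != 0 ->
  (forall c, `|W b c| = 0 \/ `|W b c| = sqrtC ((p%:R : algC) ^+ (n + s))) ->
  forall x, T b x = G b x.
Proof.
move=> b0 H; rewrite /G (negbTE b0).
apply: (injK (T b) (fun x => (p ^ (n + s))%:R * f b x)) => c.
rewrite hatT hat_f.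
case: (H c) => [/normr0_eq0 -> | h]; first by rewrite !mulr0.
by rewrite -normCK h rootCK // natrX mulrC.
Qed.

Lemma T_plateau b : b != 0 -> (forall x, T b x = G b x) ->
  forall c, `|W b c| = 0 \/ `|W b c| = sqrtC ((p%:R : algC) ^+ (n + s)).
Proof.
move=> b0 H c; have := hatT b c.
rewrite (eq_bigr (fun x => ((p ^ (n + s))%:R * f b x) / chiK (c * x))); last first.
  by move=> x _; rewrite H /G (negbTE b0).
rewrite hat_f.
have [W0 | W0] := eqVneq (W b c) 0; first by left; rewrite W0 normr0.
move=> /esym /(mulIf W0) h; right.
by rewrite -[LHS](exprCK (n:=2)) // normCK h natrX.
Qed.

Lemma keyP x y : (forall b, T b x = G b x) ->
  (p ^ m)%:R * (Ncount x y)%:R =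
  (p ^ n * p ^ n)%:R + (p ^ (n + s))%:R * ((p ^ m)%:R * (y == F x)%:R - 1) :> algC.
Proof.
move=> H; rewrite countE -sumG; apply: eq_bigr => b _; by rewrite H.
Qed.

Lemma keyP_conv x :
  (forall y, (p ^ m)%:R * (Ncount x y)%:R =
  (p ^ n * p ^ n)%:R + (p ^ (n + s))%:R * ((p ^ m)%:R * (y == F x)%:R - 1) :> algC) ->
  forall b, T b x = G b x.
Proof.
move=> H; apply: (injL (fun b => T b x) (fun b => G b x)) => y.
have := H y; rewrite countE -sumG => h.
transitivity (\sum_(b : L) (chiL (b * y))^-1 * T b x).
  by apply: eq_bigr => b _; rewrite mulrC [y * b]mulrC.
rewrite h; apply: eq_bigr => b _; by rewrite mulrC [y * b]mulrC.
Qed.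

End Main.

Lemma natEqP (R : numFieldType) (p n m s N : nat) (d : bool) :
  ((p ^ m)%:R * N%:R = (p ^ n * p ^ n)%:R + (p ^ (n + s))%:R * ((p ^ m)%:R * d%:R - 1) :> R) <->
  (p ^ m * N + p ^ (n + s) = p ^ n * p ^ n + p ^ (n + s) * (p ^ m * d))%N.
Proof.
rewrite mulrBr mulr1 addrA; split => h.
  by apply/eqP; rewrite -(@eqr_nat R) natrD natrM h subrK natrD !natrM.
have := congr1 (fun k => k%:R : R) h; rewrite !natrD !natrM => h'.
by rewrite -h' addrK.
Qed.

Lemma ratP (p n m s N : nat) (d : bool) : prime p ->
  let alpha : rat := (p%:R : rat) ^ (2%:Z * n%:Z - m%:Z)
                     - (p%:R : rat) ^ (n%:Z + s%:Z - m%:Z) in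
  let beta : rat := (p%:R : rat) ^ (n%:Z + s%:Z)
                    + (p%:R : rat) ^ (2%:Z * n%:Z - m%:Z)
                    - (p%:R : rat) ^ (n%:Z + s%:Z - m%:Z) in
  ((N%:R : rat) = (if ~~ d then alpha else beta)) <->
  ((p ^ m)%:R * N%:R = (p ^ n * p ^ n)%:R + (p ^ (n + s))%:R * ((p ^ m)%:R * d%:R - 1) :> rat).
Proof.
move=> pr_p alpha beta.
set P : rat := p%:R.
have P0 : P != 0 by rewrite pnatr_eq0 -lt0n prime_gt0.
have zpow a b : P ^ (a%:Z - b%:Z) = P ^+ a / P ^+ b by rewrite expfzDr // -exprnN.
have e2 : (2%:Z * n%:Z = (n + n)%N%:Z)%R by rewrite -PoszM mul2n -addnn.
have eA : alpha = P ^+ (n + n) / P ^+ m - P ^+ (n + s) / P ^+ m.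
  by rewrite /alpha e2 -PoszD zpow zpow.
have eB : beta = P ^+ (n + s) + alpha.
  by rewrite /beta /alpha addrA -PoszD.
rewrite eB eA !natrM !natrX -/P -!exprD.
case: d => /=; split => h.
- rewrite h; field; exact: expf_neq0.
- apply: (mulfI (expf_neq0 m P0)); rewrite h; field; exact: expf_neq0.
- rewrite h; field; exact: expf_neq0.
- apply: (mulfI (expf_neq0 m P0)); rewrite h; field; exact: expf_neq0.
Qed.


Theorem mainTheorem2 (p n m s : nat) (K L : finFieldType) (F : K -> L) :
  prime p -> (0 < n)%N -> (0 < m)%N -> (s <= n)%N ->
  #|K| = (p ^ n)%N -> #|L| = (p ^ m)%N ->
  let alpha : rat := (p%:R : rat) ^ (2%:Z * n%:Z - m%:Z)
                     - (p%:R : rat) ^ (n%:Z + s%:Z - m%:Z) in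
  let beta : rat := (p%:R : rat) ^ (n%:Z + s%:Z)
                    + (p%:R : rat) ^ (2%:Z * n%:Z - m%:Z)
                    - (p%:R : rat) ^ (n%:Z + s%:Z - m%:Z) in
  vec_plateaued p n m s F <->
  (forall (x : K) (y : L),
     ((\sum_(a : K) #|[set u : K | (y == F (u + x - a) - F u + F a)%R]|)%N%:R : rat)
     = (if y != F x then alpha else beta)).
Proof.
move=> pr_p n_gt0 m_gt0 sn cK cL alpha beta.
have eqv : forall x y,
  ((Ncount K L F x y)%:R : rat) = (if y != F x then alpha else beta) <->
  ((p ^ m)%:R * (Ncount K L F x y)%:R =
   (p ^ n * p ^ n)%:R + (p ^ (n + s))%:R * ((p ^ m)%:R * (y == F x)%:R - 1) :> algC).
  move=> x y.
  have R1 := ratP p n m s (Ncount K L F x y) (y == F x) pr_p.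
  cbv zeta in R1.
  apply: (iff_trans R1); apply: (iff_trans (natEqP _ _ _ _ _ _ _)).
  exact: iff_sym (natEqP _ _ _ _ _ _ _).
split.
- move=> Hpl x y; apply/(eqv x y).
  apply: (keyP _ _ _ _ _ _ _ pr_p m_gt0 cL) => b.
  have [-> | b0] := eqVneq b 0.
    by rewrite (T0 _ _ _ _ _ _ pr_p m_gt0 cK cL) /G eqxx.
  apply: (plateau_T _ _ _ _ _ _ _ pr_p n_gt0 m_gt0 cK cL b b0) => c.
  by rewrite -(walshE _ _ _ _ _ _ pr_p); apply: Hpl.
- move=> H b b0 a; rewrite (walshE _ _ _ _ _ _ pr_p).
  apply: (T_plateau _ _ _ _ _ _ _ pr_p n_gt0 m_gt0 cK cL b b0) => x.
  apply: (keyP_conv _ _ _ _ _ _ _ pr_p m_gt0 cL) => y.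
  by apply/(eqv x y); apply: H.
Qed.
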